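(* For every graph $U$, every graph $G\in\mathcal{D}(U)$ and every $r\in\mathbb{N}$, $\operatorname{col}^*_r(G)\le\operatorname{col}^*_r(U)$.
   Context: All graphs are simple and countable. For a total order $\preceq$ of $V(G)$, a vertex $v$ and $r\in\mathbb{N}$, $S_r(G,\preceq,v)$ is the set of vertices $w$ for which there is a path $v=w_0,w_1,\dots,w_{r'}=w$ with $0\le r'\le r$, $w\preceq v$, and $v\prec w_i$ for all $1\le i\le r'-1$. An ordered clique is a finite clique together with a linear order of its vertices. The rooted $r$-colouring number $\operatorname{col}^*_r(G)$ is the minimum integer $m$ such that for every ordered clique $C$ of $G$ there is a total order $\preceq$ of $V(G)$ in which the vertices of $C$ precede all other vertices and appear in the given order, with $|S_r(G,\preceq,v)|\le m$ for every vertex $v$ (infinite if no such $m$). The torso of a node $x$ of a tree-decomposition $(B_x:x\in V(T))$ is $G[B_x]$ plus edges $vw$ for all $v,w\in B_x\cap B_y$ with $xy\in E(T)$. $\mathcal{D}(U)$ is the class of graphs having a tree-decomposition in which every torso is isomorphic to a subgraph of $U$. *)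

(* Defs.v *)
From Stdlib Require Import Arith List Lia ClassicalEpsilon.
Import ListNotations.

Record graph := Graph {
  vert : Type;
  adj : vert -> vert -> Prop;
  adj_sym : forall u v, adj u v -> adj v u;
  adj_irrefl : forall v, ~ adj v v;
  vert_countable : exists f : vert -> nat, forall u v, f u = f v -> u = v
}.

Definition is_path {X : Type} (e : X -> X -> Prop) (p : nat -> X) (k : nat) : Prop :=
  (forall i j, i <= k -> j <= k -> p i = p j -> i = j) /\
  (forall i, i < k -> e (p i) (p (S i))).

Definition total_order {X : Type} (le : X -> X -> Prop) : Prop :=
  (forall x, le x x) /\
  (forall x y, le x y -> le y x -> x = y) /\
  (forall x y z, le x y -> le y z -> le x z) /\
  (forall x y, le x y \/ le y x).

Definition lt_of {X : Type} (le : X -> X -> Prop) (x y : X) : Prop := le x y /\ x <> y.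

Definition Sr (G : graph) (le : vert G -> vert G -> Prop) (r : nat) (v : vert G)
    (w : vert G) : Prop :=
  exists (p : nat -> vert G) (r' : nat),
    r' <= r /\ is_path (@adj G) p r' /\ p 0 = v /\ p r' = w /\ le w v /\
    (forall i, 1 <= i -> i <= r' - 1 -> lt_of le v (p i)).

Definition card_le {X : Type} (P : X -> Prop) (m : nat) : Prop :=
  exists l : list X, length l <= m /\ forall x, P x -> In x l.

(** An ordered clique: a finite clique listed in its linear order. *)
Definition ordered_clique (G : graph) (C : list (vert G)) : Prop :=
  NoDup C /\
  forall i j x y, i <> j -> nth_error C i = Some x -> nth_error C j = Some y -> adj G x y.

Definition order_extends {X : Type} (le : X -> X -> Prop) (C : list X) : Prop :=
  (forall i j x y, i < j -> nth_error C i = Some x -> nth_error C j = Some y ->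
     lt_of le x y) /\
  (forall c x, In c C -> ~ In x C -> lt_of le c x).

Definition colstar_le (G : graph) (r m : nat) : Prop :=
  forall C, ordered_clique G C ->
    exists le : vert G -> vert G -> Prop,
      total_order le /\ order_extends le C /\
      forall v, card_le (Sr G le r v) m.

(** col*_r(G) as an extended natural number (None = infinity): the minimum m
    with colstar_le G r m, or None if no such m exists. *)
Definition is_colstar (G : graph) (r : nat) (k : option nat) : Prop :=
  match k with
  | Some m => colstar_le G r m /\ forall m', colstar_le G r m' -> m <= m'
  | None => forall m, ~ colstar_le G r m
  end.

Definition colstar (G : graph) (r : nat) : option nat :=
  epsilon (inhabits None) (is_colstar G r).

Definition ole (a b : option nat) : Prop :=
  match a, b with
  | _, None => True
  | None, Some _ => False
  | Some x, Some y => x <= y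
  end.

Definition is_tree {X : Type} (e : X -> X -> Prop) : Prop :=
  (forall x y, e x y -> e y x) /\
  (forall x, ~ e x x) /\
  (forall x y, exists p k, is_path e p k /\ p 0 = x /\ p k = y) /\
  (forall (p : nat -> X) (k : nat), 3 <= k -> is_path e p (k - 1) ->
     ~ e (p (k - 1)) (p 0)).

Definition tree_decomposition (G : graph) {X : Type} (eT : X -> X -> Prop)
    (B : X -> vert G -> Prop) : Prop :=
  is_tree eT /\
  (forall v, exists x, B x v) /\
  (forall u v, adj G u v -> exists x, B x u /\ B x v) /\
  (forall v x y, B x v -> B y v ->
     exists p k, is_path eT p k /\ p 0 = x /\ p k = y /\ forall i, i <= k -> B (p i) v).

Definition torso_adj (G : graph) {X : Type} (eT : X -> X -> Prop)
    (B : X -> vert G -> Prop) (x : X) (u w : {v : vert G | B x v}) : Prop :=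
  proj1_sig u <> proj1_sig w /\
  (adj G (proj1_sig u) (proj1_sig w) \/
   exists y, eT x y /\ B y (proj1_sig u) /\ B y (proj1_sig w)).

Definition torso_in (G U : graph) {X : Type} (eT : X -> X -> Prop)
    (B : X -> vert G -> Prop) (x : X) : Prop :=
  exists f : {v : vert G | B x v} -> vert U,
    (forall u w, f u = f w -> u = w) /\
    (forall u w, torso_adj G eT B x u w -> adj U (f u) (f w)).

Definition in_D (U G : graph) : Prop :=
  exists (X : Type) (eT : X -> X -> Prop) (B : X -> vert G -> Prop),
    tree_decomposition G eT B /\ forall x, torso_in G U eT B x.

(* Main.v *)
Require Import Defs.
From Stdlib Require Import Arith List Lia Classical ClassicalEpsilon ProofIrrelevance.
Import ListNotations.

Lemma least_nat (P : nat -> Prop) : (exists n, P n) -> exists n, P n /\ forall n', P n' -> n <= n'.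
Proof.
  intros [n Hn]. revert Hn.
  induction n as [n IH] using (well_founded_induction lt_wf). intros Hn.
  destruct (classic (exists n', n' < n /\ P n')) as [[n' [Hlt Hn']]|Hno].
  - exact (IH n' Hlt Hn').
  - exists n. split; auto. intros n' Hn'. destruct (le_lt_dec n n'); auto.
    exfalso; apply Hno; eauto.
Qed.

Lemma last_before (P : nat -> Prop) i : P 0 -> 0 < i ->
  exists a, a < i /\ P a /\ forall l, a < l -> l < i -> ~ P l.
Proof.
  intros H0. induction i; intros Hi; [lia|].
  destruct (classic (P i)) as [Pi|nPi].
  - exists i. split; [lia|]. split; auto. intros; lia.
  - destruct i as [|i]; [contradiction|].
    destruct (IHi ltac:(lia)) as [a [Ha [Pa Hn]]]. exists a. split; [lia|]. split; auto.
    intros l H1 H2. destruct (Nat.eq_dec l (S i)); [subst; auto|]. apply Hn; lia.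
Qed.

Lemma nodup_neq {A} (l : list A) i j a b : NoDup l -> i <> j -> nth_error l i = Some a ->
  nth_error l j = Some b -> a <> b.
Proof.
  intros Hn Hij Ha Hb E. subst b. apply Hij. apply (proj1 (NoDup_nth_error l) Hn).
  - apply nth_error_Some. congruence.
  - congruence.
Qed.

Lemma preimage_list {A Y} (P : A -> Prop) (phi : A -> Y) :
  (forall a b, P a -> P b -> phi a = phi b -> a = b) ->
  forall lU, exists lG, length lG <= length lU /\ forall a, P a -> In (phi a) lU -> In a lG.
Proof.
  intros Hinj lU. induction lU as [|y lU IH].
  - exists []. simpl. split; [lia| intros a _ []].
  - destruct IH as [lG [Hl Hin]].
    destruct (classic (exists a, P a /\ phi a = y)) as [[a0 [Pa0 E]]|Hno].
    + exists (a0 :: lG). split; simpl; [lia|]. intros a Pa [E'|E'].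
      * left. apply Hinj; auto. congruence.
      * right. auto.
    + exists lG. split; simpl; [lia|]. intros a Pa [E'|E'].
      * exfalso. apply Hno. eauto.
      * auto.
Qed.

Lemma finite_enum {A} (P : A -> Prop) m :
  (forall l, NoDup l -> (forall a, In a l -> P a) -> length l <= m) ->
  exists l, NoDup l /\ forall a, P a <-> In a l.
Proof.
  intros Hb.
  assert (forall n l, m - length l <= n -> NoDup l -> (forall a, In a l -> P a) ->
     exists l', NoDup l' /\ forall a, P a <-> In a l') as Hg.
  { induction n; intros l Hl Hnd HP.
    all: destruct (classic (exists a, P a /\ ~ In a l)) as [[a [Pa Na]]|Hno].
    all: try (exists l; split; [exact Hnd|]; intros b; split;
       [intros Pb; destruct (classic (In b l)); auto; exfalso; apply Hno; eauto | apply HP]).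
    all: assert (length (a :: l) <= m) as Hlen
         by (apply Hb; [constructor; auto| intros b [E|E]; [subst; auto| auto]]).
    - simpl in Hlen. lia.
    - apply (IHn (a :: l)); [simpl in *; lia | constructor; auto | intros b [E|E]; [subst; auto|auto]]. }
  apply (Hg m []); simpl; [lia| constructor | intros a []].
Qed.

Lemma max_in_list {A} (F : A -> nat) (l : list A) : l <> [] ->
  exists a, In a l /\ forall b, In b l -> F b <= F a.
Proof.
  induction l as [|x l IH]; intros H; [congruence|].
  destruct l as [|y l'].
  - exists x. split; [left; auto|]. intros b [E|[]]; subst; auto.
  - destruct (IH ltac:(congruence)) as [a [Ha Hm]].
    destruct (le_lt_dec (F x) (F a)).
    + exists a. split; [right; auto|]. intros b [E|E]; [subst; auto|auto].
    + exists x. split; [left; auto|]. intros b [E|E]; [subst; auto|]. specialize (Hm b E). lia.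
Qed.

Section Tree.
Variable X : Type.
Variable eT : X -> X -> Prop.
Hypothesis Hsym : forall x y, eT x y -> eT y x.
Hypothesis Hirr : forall x, ~ eT x x.
Hypothesis Hconn : forall x y, exists p k, is_path eT p k /\ p 0 = x /\ p k = y.
Hypothesis Hacyc : forall (p : nat -> X) (k : nat), 3 <= k -> is_path eT p (k - 1) ->
  ~ eT (p (k - 1)) (p 0).
Variable rho : X.

Definition walk (q : nat -> X) k := forall i, i < k -> eT (q i) (q (S i)).
Definition reach x n := exists q, walk q n /\ q 0 = rho /\ q n = x.
Definition dP x n := reach x n /\ forall n', reach x n' -> n <= n'.

Lemma dP_ex x : exists n, dP x n.
Proof.
  destruct (Hconn rho x) as [q [k [[_ Hq] [H0 Hk]]]].
  apply least_nat. exists k, q. split; auto.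
Qed.

Definition d x := epsilon (inhabits 0) (dP x).
Lemma d_spec x : dP x (d x).
Proof. unfold d. apply epsilon_spec. apply dP_ex. Qed.

Lemma d_root : d rho = 0.
Proof.
  destruct (d_spec rho) as [_ H]. specialize (H 0).
  assert (reach rho 0) as H0 by (exists (fun _ => rho); split; [intros i Hi; lia| auto]).
  specialize (H H0). lia.
Qed.

Lemma d0 x : d x = 0 -> x = rho.
Proof. intros H. destruct (d_spec x) as [[q [_ [H0 Hn]]] _]. rewrite H in Hn. congruence. Qed.

Lemma d_edge a b : eT a b -> d b <= d a + 1.
Proof.
  intros Hab. destruct (d_spec a) as [[q [Hw [H0 Hn]]] _].
  destruct (d_spec b) as [_ Hmin]. apply Hmin.
  exists (fun i => if i <=? d a then q i else b). split; [|split].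
  - intros i Hi. destruct (Nat.leb_spec i (d a)); destruct (Nat.leb_spec (S i) (d a)).
    + apply Hw; lia.
    + replace i with (d a) by lia. rewrite Hn. exact Hab.
    + lia.
    + lia.
  - simpl. auto.
  - destruct (Nat.leb_spec (d a + 1) (d a)); [lia|auto].
Qed.

Lemma parent_ex x : x <> rho -> exists y, eT x y /\ d y + 1 = d x.
Proof.
  intros Hx. destruct (d_spec x) as [[q [Hw [H0 Hn]]] _].
  destruct (d x) as [|n] eqn:E. { exfalso. apply Hx. rewrite <- Hn. auto. }
  exists (q n). split.
  - apply Hsym. rewrite <- Hn. apply Hw. lia.
  - assert (d (q n) <= n).
    { destruct (d_spec (q n)) as [_ Hm]. apply Hm. exists q. split; auto. intros i Hi; apply Hw; lia. }
    assert (S n <= d (q n) + 1). { rewrite <- E. rewrite <- Hn. apply d_edge. apply Hw. lia. }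
    lia.
Qed.

Definition par x := epsilon (inhabits rho) (fun y => eT x y /\ d y + 1 = d x).
Lemma par_spec x : x <> rho -> eT x (par x) /\ d (par x) + 1 = d x.
Proof. intros H. unfold par. apply epsilon_spec. apply parent_ex; auto. Qed.

Definition anc z i := Nat.iter i par z.
Lemma anc_d z i : i <= d z -> d (anc z i) + i = d z.
Proof.
  induction i; intros H; unfold anc in *; simpl. lia.
  specialize (IHi ltac:(lia)).
  assert (Nat.iter i par z <> rho) as H0 by (intro E; rewrite E, d_root in IHi; lia).
  destruct (par_spec _ H0). lia.
Qed.

Lemma anc_top z : anc z (d z) = rho.
Proof. apply d0. pose proof (anc_d z (d z) (le_n _)). lia. Qed.

Lemma meet_ex a b : d a = d b -> exists j, j <= d a /\ anc a j = anc b j /\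
   forall i, i < j -> anc a i <> anc b i.
Proof.
  intros E. destruct (least_nat (fun j => j <= d a /\ anc a j = anc b j)) as [j [[H1 H2] H3]].
  - exists (d a). split; auto. rewrite anc_top. rewrite E, anc_top. auto.
  - exists j. split; auto. split; auto. intros i Hi Heq.
    assert (i <= d a) as Hia by lia. specialize (H3 i (conj Hia Heq)). lia.
Qed.

Definition cyc a b (x : X) j i := if i <? j then anc a i else if i <=? 2*j then anc b (2*j - i) else x.

Section Cyc.
Variables a b x : X.
Variable j : nat.
Hypothesis Hab : a <> b.
Hypothesis Hd : d a = d b.
Hypothesis Hj : j <= d a.
Hypothesis Hmeet : anc a j = anc b j.
Hypothesis Hmin : forall i, i < j -> anc a i <> anc b i.

Lemma j_pos : 1 <= j.
Proof. destruct (Nat.eq_dec j 0) as [e|]; [|lia]. exfalso. apply Hab. rewrite e in Hmeet. exact Hmeet. Qed.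

Lemma cyc_l i : i < j -> cyc a b x j i = anc a i.
Proof. intros H. unfold cyc. destruct (Nat.ltb_spec i j); [auto|lia]. Qed.
Lemma cyc_r i : j <= i -> i <= 2*j -> cyc a b x j i = anc b (2*j - i).
Proof. intros H H'. unfold cyc. destruct (Nat.ltb_spec i j); [lia|]. destruct (Nat.leb_spec i (2*j)); [auto|lia]. Qed.
Lemma cyc_x i : 2*j < i -> cyc a b x j i = x.
Proof. intros H. unfold cyc. destruct (Nat.ltb_spec i j); [lia|]. destruct (Nat.leb_spec i (2*j)); [lia|auto]. Qed.

Lemma cyc_depth i : i <= 2*j -> d (cyc a b x j i) <= d a.
Proof.
  intros H. destruct (lt_dec i j).
  - rewrite cyc_l by auto. pose proof (anc_d a i ltac:(lia)). lia.
  - rewrite cyc_r by lia. pose proof (anc_d b (2*j-i) ltac:(lia)). lia.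
Qed.

Lemma cyc_inj i i' : i <= 2*j -> i' <= 2*j -> cyc a b x j i = cyc a b x j i' -> i = i'.
Proof.
  intros H1 H2 E. destruct (lt_dec i j), (lt_dec i' j).
  - rewrite !cyc_l in E by auto. pose proof (anc_d a i ltac:(lia)). pose proof (anc_d a i' ltac:(lia)).
    rewrite E in *. lia.
  - rewrite cyc_l in E by auto. rewrite cyc_r in E by lia.
    pose proof (anc_d a i ltac:(lia)). pose proof (anc_d b (2*j-i') ltac:(lia)). rewrite E in *.
    assert (i = 2*j - i') by lia. subst i. exfalso. apply (Hmin (2*j-i')); [lia|exact E].
  - rewrite (cyc_l i') in E by auto. rewrite (cyc_r i) in E by lia.
    pose proof (anc_d a i' ltac:(lia)). pose proof (anc_d b (2*j-i) ltac:(lia)). rewrite <- E in *.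
    assert (i' = 2*j - i) by lia. subst i'. exfalso. apply (Hmin (2*j-i)); [lia| first [exact E | symmetry; exact E]].
  - rewrite !cyc_r in E by lia. pose proof (anc_d b (2*j-i) ltac:(lia)). pose proof (anc_d b (2*j-i') ltac:(lia)).
    rewrite E in *. lia.
Qed.

Lemma anc_nr z t : t < d z -> anc z t <> rho.
Proof. intros H E. pose proof (anc_d z t ltac:(lia)). rewrite E, d_root in H0. lia. Qed.

Lemma cyc_edge i : i < 2*j -> eT (cyc a b x j i) (cyc a b x j (S i)).
Proof.
  intros H. destruct (lt_dec (S i) j).
  - rewrite !cyc_l by lia. unfold anc at 2. simpl. apply par_spec. apply anc_nr. lia.
  - destruct (lt_dec i j).
    + assert (S i = j) by lia. rewrite cyc_l by lia. rewrite cyc_r by lia.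
      replace (2*j - S i) with j by lia. rewrite <- Hmeet. rewrite <- H0.
      unfold anc at 2. simpl. apply par_spec. apply anc_nr. lia.
    + rewrite !cyc_r by lia. replace (2*j - i) with (S (2*j - S i)) by lia.
      apply Hsym. unfold anc at 1. simpl. apply par_spec. apply anc_nr. lia.
Qed.

Lemma cyc_path : is_path eT (cyc a b x j) (2*j).
Proof. split. - intros; apply cyc_inj; auto. - apply cyc_edge. Qed.

Lemma cyc_path2 : eT b x -> d x = d a + 1 -> is_path eT (cyc a b x j) (2*j+1).
Proof.
  intros Hbx Hx. split.
  - intros i i' H1 H2 E.
    destruct (Nat.eq_dec i (2*j+1)), (Nat.eq_dec i' (2*j+1)); try lia.
    + subst i. rewrite (cyc_x (2*j+1)) in E by lia. pose proof (cyc_depth i' ltac:(lia)). rewrite <- E in H. lia.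
    + subst i'. rewrite (cyc_x (2*j+1)) in E by lia. pose proof (cyc_depth i ltac:(lia)). rewrite E in H. lia.
    + apply cyc_inj; auto; lia.
  - intros i Hi. destruct (Nat.eq_dec i (2*j)).
    + subst i. rewrite cyc_r by lia. rewrite cyc_x by lia. replace (2*j-2*j) with 0 by lia. exact Hbx.
    + apply cyc_edge. lia.
Qed.
End Cyc.

Lemma no_same_depth a b : eT a b -> d a <> d b.
Proof.
  intros Hab Hd. assert (a <> b) as Hne by (intro; subst; eapply Hirr; eauto).
  destruct (meet_ex a b Hd) as [j [Hj [Hm Hmin]]].
  assert (Hj1 : 1 <= j) by (eapply (j_pos a b j); eauto).
  apply (Hacyc (cyc a b a j) (2*j+1)); [lia| |].
  - replace (2*j+1-1) with (2*j) by lia. eapply cyc_path; eauto.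
  - replace (2*j+1-1) with (2*j) by lia. rewrite cyc_r by lia. rewrite cyc_l by lia.
    replace (2*j-2*j) with 0 by lia. simpl. apply Hsym. exact Hab.
Qed.

Lemma parent_unique x y1 y2 : eT x y1 -> eT x y2 -> d y1 + 1 = d x -> d y2 + 1 = d x -> y1 = y2.
Proof.
  intros H1 H2 E1 E2. destruct (classic (y1 = y2)) as [|Hne]; auto. exfalso.
  assert (Hd : d y1 = d y2) by lia.
  destruct (meet_ex y1 y2 Hd) as [j [Hj [Hm Hmin]]].
  assert (Hj1 : 1 <= j) by (eapply (j_pos y1 y2 j); eauto).
  apply (Hacyc (cyc y1 y2 x j) (2*j+2)); [lia| |].
  - replace (2*j+2-1) with (2*j+1) by lia. eapply cyc_path2; eauto; lia.
  - replace (2*j+2-1) with (2*j+1) by lia. rewrite cyc_x by lia. rewrite cyc_l by lia. simpl. exact H1.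
Qed.

Lemma edge_par a b : eT a b -> (a <> rho /\ b = par a) \/ (b <> rho /\ a = par b).
Proof.
  intros H. pose proof (d_edge a b H). pose proof (d_edge b a (Hsym _ _ H)).
  pose proof (no_same_depth a b H).
  destruct (Nat.lt_ge_cases (d b) (d a)).
  - left. assert (a <> rho) as Ha by (intro E; subst; rewrite d_root in *; lia).
    split; auto. destruct (par_spec a Ha). apply (parent_unique a); auto. lia.
  - right. assert (b <> rho) as Hb by (intro E; subst; rewrite d_root in *; lia).
    split; auto. destruct (par_spec b Hb). apply (parent_unique b); auto. lia.
Qed.

Definition Sub y z := exists j, anc z j = y /\ d y + j = d z.

Lemma Sub_refl y : Sub y y.
Proof. exists 0. split; auto. Qed.
Lemma Sub_par z : z <> rho -> Sub (par z) z.
Proof. intros H. exists 1. split; auto. destruct (par_spec z H). lia. Qed.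
Lemma Sub_trans a0 b0 c : Sub a0 b0 -> Sub b0 c -> Sub a0 c.
Proof.
  intros [j' [E1 D1]] [j [E2 D2]]. exists (j' + j). split; [|lia].
  unfold anc in *. rewrite Nat.iter_add. rewrite E2. auto.
Qed.
Lemma Sub_d y z : Sub y z -> d y <= d z.
Proof. intros [j [_ D]]. lia. Qed.
Lemma Sub_eq y z : Sub y z -> d y = d z -> y = z.
Proof. intros [j [E D]] D2. assert (j = 0) by lia. subst. auto. Qed.
Lemma Sub_inv y z : Sub y z -> z <> y -> z <> rho /\ Sub y (par z).
Proof.
  intros [j [E D]] Hne. destruct j as [|j]; [subst; simpl in *; congruence|].
  assert (z <> rho) as Hz by (intro; subst; rewrite d_root in D; lia).
  split; auto. exists j. destruct (par_spec z Hz). split; [|lia].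
  unfold anc in *. rewrite Nat.iter_succ_r in E. auto.
Qed.
Lemma Sub_par_l y z : Sub y z -> z <> y -> Sub y (par z).
Proof. intros H1 H2. apply Sub_inv; auto. Qed.

Lemma mono q k : is_path eT q k -> 1 <= k -> q 1 <> rho -> q 0 = par (q 1) ->
  forall i, i < k -> q (S i) <> rho /\ q i = par (q (S i)).
Proof.
  intros [Hinj He] Hk H1 H0. induction i; intros Hi; auto.
  destruct (IHi ltac:(lia)) as [_ IH].
  destruct (edge_par _ _ (He (S i) Hi)) as [[Hn E]|[Hn E]]; auto.
  exfalso. rewrite <- IH in E. pose proof (Hinj (S (S i)) i ltac:(lia) ltac:(lia) E). lia.
Qed.

Lemma mono_sub q k : is_path eT q k -> 1 <= k -> q 1 <> rho -> q 0 = par (q 1) ->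
  forall i, 1 <= i -> i <= k -> Sub (q 1) (q i).
Proof.
  intros Hp Hk H1 H0. induction i; intros Hi Hik; [lia|].
  destruct (Nat.eq_dec i 0); [subst; apply Sub_refl|].
  apply Sub_trans with (q i); [apply IHi; lia|].
  destruct (mono q k Hp Hk H1 H0 i ltac:(lia)) as [Hn E]. rewrite E. apply Sub_par; auto.
Qed.

Lemma first_step q k : is_path eT q k -> 1 <= k ->
  (q 0 <> rho /\ q 1 = par (q 0)) \/
  (q 1 <> rho /\ q 0 = par (q 1) /\ forall i, 1 <= i -> i <= k -> Sub (q 1) (q i)).
Proof.
  intros Hp Hk. destruct (edge_par _ _ (proj2 Hp 0 Hk)) as [H|[Hn E]]; [left; auto|right].
  split; auto. split; auto. intros i H1 H2; eapply mono_sub; eauto.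
Qed.

Lemma exit_lem y q k : (forall i, i < k -> eT (q i) (q (S i))) -> Sub y (q 0) -> ~ Sub y (q k) ->
  exists i, i < k /\ q i = y /\ y <> rho /\ q (S i) = par y.
Proof.
  intros He H0 Hk.
  assert (forall n, n <= k -> (forall i, i <= n -> Sub y (q i)) \/
            exists i, i < n /\ q i = y /\ y <> rho /\ q (S i) = par y) as Hind.
  { induction n; intros Hn.
    - left. intros i Hi. replace i with 0 by lia. auto.
    - destruct (IHn ltac:(lia)) as [HL|[i [Hi R]]]; [|right; exists i; split; [lia|auto]].
      destruct (classic (Sub y (q (S n)))) as [HS|HnS].
      + left. intros i Hi. destruct (Nat.eq_dec i (S n)); [subst; auto|]. apply HL; lia.
      + right. exists n. split; [lia|].
        destruct (edge_par _ _ (He n ltac:(lia))) as [[Hr E]|[Hr E]].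
        * destruct (classic (q n = y)) as [Eq|Neq].
          -- subst y. auto.
          -- exfalso. apply HnS. rewrite E. apply Sub_par_l; auto.
        * exfalso. apply HnS. apply Sub_trans with (q n); auto. rewrite E. apply Sub_par; auto. }
  destruct (Hind k (le_n _)) as [HL|HR]; auto. exfalso. apply Hk, HL. auto.
Qed.

Section Dec.
Variable G : graph.
Variable B : X -> vert G -> Prop.
Hypothesis Hcov : forall v, exists x, B x v.
Hypothesis Hedge : forall u v, adj G u v -> exists x, B x u /\ B x v.
Hypothesis Hbcon : forall v x y, B x v -> B y v ->
  exists p k, is_path eT p k /\ p 0 = x /\ p k = y /\ forall i, i <= k -> B (p i) v.

Definition hP u x := B x u /\ forall y, B y u -> d x <= d y.
Definition h u := epsilon (inhabits rho) (hP u).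
Lemma h_spec u : hP u (h u).
Proof.
  unfold h. apply epsilon_spec.
  destruct (Hcov u) as [x0 Hx0].
  destruct (least_nat (fun n => exists x, B x u /\ d x = n)) as [n [[x [Hx E]] Hmin]]; eauto.
  exists x. split; auto. intros y Hy. subst n. apply Hmin. eauto.
Qed.
Lemma h_bag u : B (h u) u.
Proof. apply h_spec. Qed.
Lemma h_min u y : B y u -> d (h u) <= d y.
Proof. apply h_spec. Qed.

Lemma h_sub u z : B z u -> Sub (h u) z.
Proof.
  intros Hz. destruct (Hbcon u (h u) z (h_bag u) Hz) as [q [k [Hp [H0 [Hk HB]]]]].
  destruct k as [|k]. { subst. rewrite <- H0. apply Sub_refl. }
  destruct (first_step q (S k) Hp ltac:(lia)) as [[Hn E]|[Hn [E HS]]].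
  - exfalso. pose proof (h_min u (q 1) (HB 1 ltac:(lia))). rewrite H0 in *.
    destruct (par_spec (h u) ltac:(congruence)). rewrite E in H. lia.
  - rewrite <- Hk, <- H0. apply Sub_trans with (q 1); [|apply HS; lia].
    rewrite E. apply Sub_par; auto.
Qed.

Lemma h_unique u x : B x u -> d x <= d (h u) -> x = h u.
Proof.
  intros Hx Hd. symmetry. apply Sub_eq; [apply h_sub; auto|]. pose proof (h_min u x Hx). lia.
Qed.

Lemma step_lem u x z : B x u -> B z u -> z <> x ->
  (x <> rho /\ B (par x) u) \/ (exists y, y <> rho /\ par y = x /\ Sub y z).
Proof.
  intros Hx Hz Hne. destruct (Hbcon u x z Hx Hz) as [q [k [Hp [H0 [Hk HB]]]]].
  destruct k as [|k]. { exfalso. apply Hne. congruence. }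
  destruct (first_step q (S k) Hp ltac:(lia)) as [[Hn E]|[Hn [E HS]]].
  - left. rewrite <- H0. split; auto. rewrite <- E. apply HB. lia.
  - right. exists (q 1). split; auto. split; [congruence|]. rewrite <- Hk. apply HS; lia.
Qed.

Lemma S1 y z u : Sub y z -> y <> rho -> B z u -> B (par y) u -> B y u.
Proof.
  intros Hs Hy Hz Hp. destruct (Hbcon u z (par y) Hz Hp) as [q [k [Hq [H0 [Hk HB]]]]].
  destruct (exit_lem y q k (proj2 Hq)) as [i [Hi [E _]]].
  - congruence.
  - rewrite Hk. intro H. apply Sub_d in H. destruct (par_spec y Hy). lia.
  - rewrite <- E. apply HB. lia.
Qed.

Lemma S2 y z u : Sub y z -> y <> rho -> B z u -> ~ B (par y) u -> forall z', B z' u -> Sub y z'.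
Proof.
  intros Hs Hy Hz Hp z' Hz'. destruct (classic (Sub y z')) as [|Hn]; auto. exfalso.
  destruct (Hbcon u z z' Hz Hz') as [q [k [Hq [H0 [Hk HB]]]]].
  destruct (exit_lem y q k (proj2 Hq)) as [i [Hi [E [_ E2]]]].
  - congruence.
  - congruence.
  - apply Hp. rewrite <- E2. apply HB. lia.
Qed.

Lemma helly C : ordered_clique G C -> C <> [] -> exists x, forall c, In c C -> B x c.
Proof.
  intros [Hnd Hadj] HC.
  destruct (max_in_list (fun c => d (h c)) C HC) as [cs [Hcs Hmax]].
  exists (h cs). intros c Hc.
  destruct (classic (c = cs)) as [->|Hne]; [apply h_bag|].
  destruct (In_nth_error _ _ Hc) as [i Hi]. destruct (In_nth_error _ _ Hcs) as [j Hj].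
  assert (adj G c cs) as Hcc by (apply (Hadj i j); auto; intro; subst; congruence).
  destruct (Hedge _ _ Hcc) as [z [Hz1 Hz2]].
  assert (Sub (h cs) z) as Hsz by (apply h_sub; auto).
  destruct (classic (Sub (h cs) (h c))) as [Hs|Hns].
  - assert (h cs = h c) as E.
    { apply Sub_eq; auto. pose proof (Sub_d _ _ Hs). specialize (Hmax c Hc). simpl in Hmax. lia. }
    rewrite E. apply h_bag.
  - destruct (Hbcon c z (h c) Hz1 (h_bag c)) as [q [k [Hq [H0 [Hk HB]]]]].
    destruct (exit_lem (h cs) q k (proj2 Hq)) as [i0 [Hi0 [E _]]]; [congruence|congruence|].
    rewrite <- E. apply HB. lia.
Qed.

Section Torso.
Variable U : graph.
Variables r m : nat.

Definition TA x a b := a <> b /\ (adj G a b \/ exists y, eT x y /\ B y a /\ B y b).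
Definition TS x (R : vert G -> vert G -> Prop) v w := exists q k, k <= r /\ is_path (TA x) q k /\
  (forall i, i <= k -> B x (q i)) /\ q 0 = v /\ q k = w /\ R w v /\
  (forall i, 1 <= i -> i <= k - 1 -> R v (q i) /\ v <> q i).
Definition Sspec x L (R : vert G -> vert G -> Prop) :=
 (forall a, B x a -> R a a) /\ (forall a b, B x a -> B x b -> R a b -> R b a -> a = b) /\
 (forall a b c, B x a -> B x b -> B x c -> R a b -> R b c -> R a c) /\
 (forall a b, B x a -> B x b -> R a b \/ R b a) /\
 (forall i j a b, i < j -> nth_error L i = Some a -> nth_error L j = Some b -> R a b /\ a <> b) /\
 (forall c u, In c L -> B x u -> ~ In u L -> R c u /\ c <> u) /\
 (forall v, B x v -> card_le (TS x R v) m).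
Definition Clique x L := NoDup L /\ (forall u, In u L -> B x u) /\
  (forall i j a b, i <> j -> nth_error L i = Some a -> nth_error L j = Some b -> TA x a b).

Lemma torso_order x L : torso_in G U eT B x -> colstar_le U r m -> Clique x L -> exists R, Sspec x L R.
Proof.
  intros [f [finj fadj]] HU [Hnd [HLB HLT]].
  destruct (classic (exists a, B x a)) as [[a0 Ha0]|Hno].
  2:{ exists (fun _ _ => True). unfold Sspec.
      split; [|split; [|split; [|split; [|split; [|split]]]]].
      - intros; exact I.
      - intros a b Ha; exfalso; eauto.
      - intros a b c Ha; exfalso; eauto.
      - intros a b Ha; exfalso; eauto.
      - intros i j a b _ Ha. exfalso. apply Hno. exists a. apply HLB. eapply nth_error_In; eauto.
      - intros c u Hc. exfalso. apply Hno. eauto.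
      - intros v Hv. exfalso; eauto. }
  set (phi := fun u => match excluded_middle_informative (B x u) with
                 | left H => f (exist _ u H) | right _ => f (exist _ a0 Ha0) end).
  assert (phi_eq : forall u (H : B x u), phi u = f (exist _ u H)).
  { intros u H. unfold phi. destruct (excluded_middle_informative (B x u)) as [H'|H']; [|contradiction].
    rewrite (proof_irrelevance _ H' H). reflexivity. }
  assert (phi_inj : forall u w, B x u -> B x w -> phi u = phi w -> u = w).
  { intros u w Hu Hw E. rewrite (phi_eq u Hu), (phi_eq w Hw) in E. apply finj in E.
    apply (f_equal (@proj1_sig _ _)) in E. exact E. }
  assert (phi_adj : forall a b, B x a -> B x b -> TA x a b -> adj U (phi a) (phi b)).
  { intros a b Ha Hb HT. rewrite (phi_eq a Ha), (phi_eq b Hb). apply fadj. exact HT. }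
  assert (HUC : ordered_clique U (map phi L)).
  { split.
    - apply NoDup_map_NoDup_ForallPairs; auto. intros a b Ha Hb E. apply phi_inj; auto.
    - intros i j a' b' Hij Ha Hb. rewrite nth_error_map in Ha, Hb.
      destruct (nth_error L i) as [a|] eqn:Ea; [|discriminate].
      destruct (nth_error L j) as [b|] eqn:Eb; [|discriminate].
      simpl in Ha, Hb. injection Ha as <-. injection Hb as <-.
      apply phi_adj; [apply HLB; eapply nth_error_In; eauto | apply HLB; eapply nth_error_In; eauto
                     | eapply HLT; eauto]. }
  destruct (HU _ HUC) as [leU [[Hr [Ha [Ht Hto]]] [[He1 He2] Hc]]].
  exists (fun a b => B x a /\ B x b /\ leU (phi a) (phi b)).
  split; [|split; [|split; [|split; [|split; [|split]]]]].
  - intros a Ha'. repeat split; auto.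
  - intros a b Ha' Hb [_ [_ H1]] [_ [_ H2]]. apply phi_inj; auto.
  - intros a b c Ha' Hb Hc' [_ [_ H1]] [_ [_ H2]]. repeat split; auto. eapply Ht; eauto.
  - intros a b Ha' Hb. destruct (Hto (phi a) (phi b)); [left|right]; repeat split; auto.
  - intros i j a b Hij Hia Hjb.
    assert (B x a) by (apply HLB; eapply nth_error_In; eauto).
    assert (B x b) by (apply HLB; eapply nth_error_In; eauto).
    destruct (He1 i j (phi a) (phi b) Hij) as [H1 H2]; try (apply map_nth_error; auto).
    split; [repeat split; auto|]. intro E; apply H2; congruence.
  - intros c u Hc' Hu Hn. assert (B x c) by auto.
    destruct (He2 (phi c) (phi u)) as [H1 H2].
    + apply in_map. auto.
    + intro Hm. apply in_map_iff in Hm as [c' [E Hc'']]. apply Hn. rewrite <- (phi_inj c' u); auto.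
    + split; [repeat split; auto| intro E; apply H2; congruence].
  - intros v Hv. destruct (Hc (phi v)) as [lU [HlU Hin]].
    destruct (preimage_list (B x) phi phi_inj lU) as [lG [HlG HinG]].
    exists lG. split; [lia|].
    intros w [q [k [Hk [Hp [HB [H0 [Hk' [Hwv Hint]]]]]]]].
    assert (B x w) by (rewrite <- Hk'; apply HB; auto). apply HinG; auto. apply Hin.
    exists (fun i => phi (q i)), k. split; [auto|]. split; [split|].
    + intros i j Hi Hj E. apply (proj1 Hp); try lia. apply phi_inj; [apply HB; lia|apply HB; lia|exact E].
    + intros i Hi. apply phi_adj; [apply HB; lia | apply HB; lia | apply (proj2 Hp); auto].
    + split; [simpl; congruence|]. split; [congruence|]. split; [destruct Hwv as [_ [_ Hw]]; exact Hw|].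
      intros i H1 H2. destruct (Hint i H1 H2) as [[_ [_ Hl]] Hne]. split; auto.
      intro E. apply Hne. apply phi_inj; auto. apply HB; lia.
Qed.

Lemma clique_bound x L R : 1 <= r -> Clique x L -> Sspec x L R -> length L <= m.
Proof.
  intros Hr [Hnd [HLB HLT]] [Hrefl [_ [_ [_ [HP1 [_ HP3]]]]]].
  destruct (Nat.eq_dec (length L) 0) as [E0|Hn0]; [lia|].
  set (n := length L - 1).
  destruct (nth_error L n) as [vL|] eqn:EvL.
  2:{ exfalso. apply nth_error_None in EvL. unfold n in EvL. lia. }
  assert (HvL : B x vL) by (apply HLB; eapply nth_error_In; eauto).
  destruct (HP3 vL HvL) as [l [Hl Hin]].
  enough (incl L l) as Hinc by (pose proof (NoDup_incl_length Hnd Hinc); lia).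
  intros b Hb. apply Hin. destruct (In_nth_error _ _ Hb) as [ib Hib].
  assert (HbB : B x b) by auto.
  assert (ib < length L) by (apply nth_error_Some; congruence).
  destruct (Nat.eq_dec ib n) as [E|Hne].
  - subst ib. rewrite EvL in Hib. injection Hib as <-.
    exists (fun _ => vL), 0. split; [lia|]. split; [split; [intros; lia| intros; lia]|].
    split; [intros; auto|]. split; auto. split; auto. split; [apply Hrefl; auto|]. intros; lia.
  - assert (Hne2 : vL <> b). { eapply nodup_neq; [exact Hnd| | exact EvL| exact Hib]. lia. }
    exists (fun i => if i =? 0 then vL else b), 1. split; [lia|]. split; [split|].
    + intros i j Hi Hj E. destruct i as [|[|]], j as [|[|]]; simpl in E; try lia; congruence.
    + intros i Hi. replace i with 0 by lia. simpl. eapply HLT; [| exact EvL | exact Hib]. lia.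
    + split; [intros i Hi; destruct (i =? 0); auto|]. split; [reflexivity|]. split; [reflexivity|].
      split; [apply (HP1 ib n b vL); auto; unfold n in *; lia|]. intros; lia.
Qed.

Section Main.
Hypothesis Htor : forall x, torso_in G U eT B x.
Hypothesis HU : colstar_le U r m.
Hypothesis Hr : 1 <= r.
Variable C : list (vert G).
Hypothesis HC : ordered_clique G C.
Hypothesis HCroot : forall c, In c C -> B rho c.
Variable v0 : vert G.
Variable g : vert G -> nat.
Hypothesis ginj : forall u v, g u = g v -> u = v.

Definition Aset x u := x <> rho /\ B x u /\ B (par x) u.
Definition LP x l := (x = rho /\ l = C) \/ (x <> rho /\ NoDup l /\ forall u, Aset x u <-> In u l).

Lemma LP_ex x : exists l, LP x l.
Proof.
  destruct (classic (x = rho)) as [->|Hx]; [exists C; left; auto|].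
  destruct (finite_enum (Aset x) m) as [l [Hnd Hl]].
  - intros l Hnd Hl.
    assert (Clique x l) as Hcl.
    { split; auto. split; [intros u Hu; destruct (Hl u Hu) as [_ [Hb _]]; exact Hb|].
      intros i j a b Hij Ha Hb. split; [eapply nodup_neq; eauto|].
      right. exists (par x). split; [apply par_spec; auto|].
      split; [apply (Hl a); eapply nth_error_In; eauto| apply (Hl b); eapply nth_error_In; eauto]. }
    destruct (torso_order x l (Htor x) HU Hcl) as [R HR].
    eapply clique_bound; eauto.
  - exists l. right. auto.
Qed.

Definition Lx x := epsilon (inhabits []) (LP x).
Lemma Lx_spec x : LP x (Lx x).
Proof. unfold Lx. apply epsilon_spec. apply LP_ex. Qed.
Lemma Lx_root : Lx rho = C.
Proof. destruct (Lx_spec rho) as [[_ E]|[H _]]; [auto|congruence]. Qed.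
Lemma Lx_nonroot x u : x <> rho -> (Aset x u <-> In u (Lx x)).
Proof. intros Hx. destruct (Lx_spec x) as [[E _]|[_ [_ H]]]; [congruence|auto]. Qed.

Lemma Lx_clique x : Clique x (Lx x).
Proof.
  destruct (Lx_spec x) as [[Ex E]|[Hx [Hnd Hl]]].
  - rewrite E. subst x. destruct HC as [Hnd Hadj]. split; auto. split; auto.
    intros i j a b Hij Ha Hb. split; [eapply nodup_neq; eauto|]. left. eapply Hadj; eauto.
  - split; auto. split; [intros u Hu; apply Hl in Hu; apply Hu|].
    intros i j a b Hij Ha Hb. split; [eapply nodup_neq; eauto|].
    right. exists (par x). split; [apply par_spec; auto|].
    split; [apply (Hl a); eapply nth_error_In; eauto| apply (Hl b); eapply nth_error_In; eauto].
Qed.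

Definition sig x := epsilon (inhabits (fun _ _ : vert G => True)) (Sspec x (Lx x)).
Lemma sig_spec x : Sspec x (Lx x) (sig x).
Proof. unfold sig. apply epsilon_spec. apply torso_order; auto. apply Lx_clique. Qed.

Definition rep x := epsilon (inhabits v0) (fun u => h u = x).
Lemma rep_spec x u : h u = x -> h (rep x) = x.
Proof. intros E. unfold rep. apply epsilon_spec. eauto. Qed.
Definition k1 u := d (h u).
Definition k2 u := g (rep (h u)).
Definition GLE u w := k1 u < k1 w \/ (k1 u = k1 w /\ (k2 u < k2 w \/ (k2 u = k2 w /\ sig (h u) u w))).

Lemma keq u w : k2 u = k2 w -> h u = h w.
Proof.
  intros E. unfold k2 in E. apply ginj in E.
  pose proof (rep_spec (h u) u eq_refl). pose proof (rep_spec (h w) w eq_refl). congruence.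
Qed.

Lemma GLE_total : total_order GLE.
Proof.
  unfold GLE. split; [|split; [|split]].
  - intros u. right. split; auto. right. split; auto. apply (proj1 (sig_spec (h u))). apply h_bag.
  - intros u w H1 H2.
    destruct H1 as [H1|[E1 H1]]; destruct H2 as [H2|[E2 H2]]; try lia.
    destruct H1 as [H1|[F1 H1]]; destruct H2 as [H2|[F2 H2]]; try lia.
    pose proof (keq u w F1) as Eh. rewrite <- Eh in H2.
    destruct (sig_spec (h u)) as [_ [Ha _]]. apply Ha; auto; [apply h_bag| rewrite Eh; apply h_bag].
  - intros u v w H1 H2.
    destruct H1 as [H1|[E1 H1]]; destruct H2 as [H2|[E2 H2]]; try (left; lia).
    right. split; [lia|].
    destruct H1 as [H1|[F1 H1]]; destruct H2 as [H2|[F2 H2]]; try (left; lia).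
    right. split; [lia|].
    assert (Euv : h u = h v) by (apply keq; auto). assert (Evw : h v = h w) by (apply keq; auto).
    destruct (sig_spec (h u)) as [_ [_ [Ht _]]]. apply Ht with v;
      [apply h_bag | rewrite Euv; apply h_bag | rewrite Euv, Evw; apply h_bag | auto | rewrite Euv; auto].
  - intros u w. destruct (Nat.lt_trichotomy (k1 u) (k1 w)) as [Hl|[E1|Hl]];
      [left; left; auto| |right; left; auto].
    destruct (Nat.lt_trichotomy (k2 u) (k2 w)) as [Hl|[E2|Hl]];
      [left; right; split; auto| |right; right; split; auto].
    assert (Euw : h u = h w) by (apply keq; auto).
    destruct (sig_spec (h u)) as [_ [_ [_ [Hto _]]]].
    destruct (Hto u w (h_bag u) ltac:(rewrite Euw; apply h_bag)) as [S|S];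
      [left; right; split; auto; right; split; auto| right; right; split; auto; right; split; auto].
    rewrite <- Euw. auto.
Qed.

Lemma GLE_k1 u w : GLE u w -> k1 u <= k1 w.
Proof. unfold GLE. intros [H|[H _]]; lia. Qed.

Lemma GLE_same u w : h u = h w -> GLE u w -> sig (h u) u w.
Proof.
  intros E [H|[_ [H|[_ H]]]]; auto; unfold k1, k2 in H; rewrite E in H; lia.
Qed.
Lemma GLE_of_sig u w : h u = h w -> sig (h u) u w -> GLE u w.
Proof.
  intros E H. right. unfold k1, k2. rewrite E. split; auto. right. split; auto. rewrite <- E; auto.
Qed.

Lemma hC c : In c C -> h c = rho.
Proof. intros Hc. symmetry. apply h_unique; auto. rewrite d_root. lia. Qed.

Lemma GLE_ext : order_extends GLE C.
Proof.
  split.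
  - intros i j a b Hij Ha Hb.
    assert (Ea : h a = rho) by (apply hC; eapply nth_error_In; eauto).
    assert (Eb : h b = rho) by (apply hC; eapply nth_error_In; eauto).
    destruct (sig_spec rho) as [_ [_ [_ [_ [P1 _]]]]]. rewrite Lx_root in P1.
    destruct (P1 i j a b Hij Ha Hb) as [S N]. split; auto.
    apply GLE_of_sig; [congruence|]. rewrite Ea. auto.
  - intros c u Hc Hu. assert (Ec : h c = rho) by (apply hC; auto).
    split; [|intro; subst; contradiction].
    destruct (classic (h u = rho)) as [Eu|Nu].
    + destruct (sig_spec rho) as [_ [_ [_ [_ [_ [P2 _]]]]]]. rewrite Lx_root in P2.
      apply GLE_of_sig; [congruence|]. rewrite Ec. apply P2; auto. rewrite <- Eu. apply h_bag.
    + left. unfold k1. rewrite Ec, d_root. destruct (d (h u)) eqn:E; [|lia]. exfalso. apply Nu. apply d0. auto.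
Qed.

Lemma Sr_sub v w : Sr G GLE r v w -> TS (h v) (sig (h v)) v w.
Proof.
  intros [q [k [Hk [Hp [H0 [Hkw [Hwv Hint]]]]]]].
  set (x := h v).
  assert (Ehv : h v = x) by reflexivity.
  assert (Hxv : B x v) by apply h_bag.
  assert (HA : forall u, x <> rho -> B (par x) u -> k1 u < k1 v).
  { intros u Hxr Hpu. unfold k1. pose proof (h_min u (par x) Hpu). destruct (par_spec x Hxr).
    fold x. lia. }
  assert (Hintk : forall i, 1 <= i -> i <= k - 1 -> k1 v <= k1 (q i)).
  { intros i H1 H2. apply GLE_k1. apply (Hint i H1 H2). }
  set (Rv := fun y u => y <> rho /\ par y = x /\ ~ B x u /\ forall z, B z u -> Sub y z).
  assert (R_not_le : forall y u, Rv y u -> ~ GLE u v).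
  { intros y u [Hy [Ey [_ Hs]]] Hle. apply GLE_k1 in Hle. unfold k1 in Hle.
    pose proof (Sub_d _ _ (Hs _ (h_bag u))) as Hd. destruct (par_spec y Hy) as [_ Hdy].
    rewrite Ey in Hdy. fold x in Hle. lia. }
  assert (Hgood : forall i, i <= k -> B x (q i) \/ exists y, Rv y (q i)).
  { induction i; intros Hi.
    - left. rewrite H0. auto.
    - destruct (classic (B x (q (S i)))) as [Hb'|Hnb]; [left; auto|right].
      destruct (Hedge (q i) (q (S i)) (proj2 Hp i ltac:(lia))) as [z [Hz1 Hz2]].
      destruct (IHi ltac:(lia)) as [Hb|[y Hy]].
      + assert (Hzx : z <> x) by (intro; subst; contradiction).
        destruct (step_lem (q i) x z Hb Hz1 Hzx) as [[Hxr Hpx]|[y [Hy [Ey Hsy]]]].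
        * exfalso. pose proof (HA (q i) Hxr Hpx) as Hlt.
          destruct i as [|i'].
          -- rewrite H0 in Hlt. lia.
          -- pose proof (Hintk (S i') ltac:(lia) ltac:(lia)). lia.
        * exists y. split; auto. split; auto. split; auto. intros z' Hz'.
          apply (S2 y z (q (S i))); auto. rewrite Ey. auto.
      + destruct Hy as [Hy [Ey [Hnx Hs]]]. exists y. split; auto. split; auto. split; auto.
        intros z' Hz'. apply (S2 y z (q (S i))); auto. rewrite Ey. auto. }
  assert (Hwx : B x w).
  { rewrite <- Hkw. destruct (Hgood k (le_n _)) as [|[y Hy]]; auto. exfalso.
    apply (R_not_le y (q k) Hy). rewrite Hkw. auto. }
  assert (Hbridge : forall a b, a < b -> b <= k -> B x (q a) -> B x (q b) ->
     (forall l, a < l -> l < b -> ~ B x (q l)) -> TA x (q a) (q b)).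
  { intros a b Hab Hbk Ha Hb Hn. split.
    { intro E. apply (proj1 Hp) in E; lia. }
    destruct (Nat.eq_dec b (S a)) as [->|Hne].
    { left. apply (proj2 Hp). lia. }
    right.
    destruct (Hgood (S a) ltac:(lia)) as [Hc|[y [Hy [Ey [Hnx Hs]]]]].
    { exfalso. apply (Hn (S a)); auto; lia. }
    assert (Hall : forall t, S a + t < b -> forall z, B z (q (S a + t)) -> Sub y z).
    { induction t; intros Ht.
      - rewrite Nat.add_0_r. auto.
      - destruct (Hedge _ _ (proj2 Hp (S a + t) ltac:(lia))) as [z [Hz1 Hz2]].
        replace (S a + S t) with (S (S a + t)) by lia.
        apply (S2 y z (q (S (S a + t)))); [ | exact Hy | exact Hz2 | rewrite Ey; apply Hn; lia].
        apply IHt; [lia|exact Hz1]. }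
    exists y. split; [apply Hsym; rewrite <- Ey; apply par_spec; auto|]. split.
    - destruct (Hedge _ _ (proj2 Hp a ltac:(lia))) as [z [Hz1 Hz2]].
      apply (S1 y z (q a)); [ | exact Hy | exact Hz1 | rewrite Ey; exact Ha].
      apply (Hall 0); [lia| ]. rewrite Nat.add_0_r. auto.
    - destruct (Hedge _ _ (proj2 Hp (b - 1) ltac:(lia))) as [z [Hz1 Hz2]].
      replace (S (b-1)) with b in Hz2 by lia.
      apply (S1 y z (q b)); [ | exact Hy | exact Hz2 | rewrite Ey; exact Hb].
      apply (Hall (b - 1 - S a)); [lia|]. replace (S a + (b - 1 - S a)) with (b-1) by lia. auto. }
  assert (Hsubseq : forall i, i <= k -> B x (q i) -> exists k' (iota : nat -> nat),
     iota 0 = 0 /\ iota k' = i /\ k' <= i /\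
     (forall j, j < k' -> iota j < iota (S j) /\ TA x (q (iota j)) (q (iota (S j)))) /\
     (forall j, j <= k' -> B x (q (iota j)))).
  { intros i. induction i as [i IH] using (well_founded_induction lt_wf). intros Hik Hbi.
    destruct (Nat.eq_dec i 0) as [->|Hi0].
    - exists 0, (fun _ => 0). split; auto. split; auto. split; auto. split; [intros; lia|].
      intros j _. auto.
    - destruct (last_before (fun l => B x (q l)) i) as [a [Ha [Hba Hn]]]; [rewrite H0; auto|lia|].
      destruct (IH a Ha ltac:(lia) Hba) as [k' [iota [I0 [Ik [Hk'' [Hst Hbb]]]]]].
      exists (S k'), (fun j => if j <=? k' then iota j else i).
      split; [simpl; auto|].
      split; [destruct (Nat.leb_spec (S k') k'); [lia|auto]|].
      split; [lia|]. split.
      + intros j Hj. destruct (Nat.leb_spec j k'); [|lia]. destruct (Nat.leb_spec (S j) k').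
        * apply Hst. lia.
        * assert (j = k') by lia. subst j. rewrite Ik. split; [auto|]. apply Hbridge; auto.
      + intros j Hj. destruct (Nat.leb_spec j k'); auto. }
  destruct (Hsubseq k (le_n _) ltac:(rewrite Hkw; auto)) as [k' [iota [I0 [Ik [Hk' [Hst Hbb]]]]]].
  assert (Hmono : forall j j', j < j' -> j' <= k' -> iota j < iota j').
  { intros j j' H1 H2. induction j' as [|j' IHj]; [lia|].
    destruct (Nat.eq_dec j j') as [->|]; [apply Hst; lia|].
    pose proof (Hst j' ltac:(lia)). specialize (IHj ltac:(lia) ltac:(lia)). lia. }
  assert (Hle : forall j, j <= k' -> iota j <= k).
  { intros j Hj. destruct (Nat.eq_dec j k') as [->|]; [lia|].
    pose proof (Hmono j k' ltac:(lia) (le_n _)). lia. }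
  exists (fun j => q (iota j)), k'. split; [lia|]. split; [split|].
  - intros j j' Hj Hj' E. apply (proj1 Hp) in E; try (apply Hle; auto).
    destruct (Nat.lt_trichotomy j j') as [Hl|[|Hl]]; auto.
    + pose proof (Hmono j j' Hl Hj'). lia.
    + pose proof (Hmono j' j Hl Hj). lia.
  - intros j Hj. apply Hst. auto.
  - split; auto. split; [simpl; rewrite I0; auto|]. split; [rewrite Ik; auto|]. split.
    + destruct (classic (h w = x)) as [Ehw|Nhw].
      * rewrite <- Ehw. apply GLE_same; auto; rewrite Ehw; reflexivity.
      * destruct (step_lem w x (h w) Hwx (h_bag w) Nhw) as [[Hxr Hpx]|[y [Hy [Ey Hs]]]].
        -- assert (In w (Lx x)) by (apply Lx_nonroot; auto; split; auto).
           assert (~ In v (Lx x)) as Hnv.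
           { intro Hv. apply Lx_nonroot in Hv; auto. destruct Hv as [_ [_ Hpv]].
             pose proof (HA v Hxr Hpv). lia. }
           destruct (sig_spec x) as [_ [_ [_ [_ [_ [P2 _]]]]]]. apply (P2 w v); auto.
        -- exfalso. pose proof (Sub_d _ _ Hs). pose proof (h_min w x Hwx). destruct (par_spec y Hy).
           rewrite Ey in *. lia.
    + intros j H1 H2.
      assert (Hi1 : 1 <= iota j) by (pose proof (Hmono 0 j ltac:(lia) ltac:(lia)); lia).
      assert (Hi2 : iota j <= k - 1) by (pose proof (Hmono j k' ltac:(lia) (le_n _)); lia).
      destruct (Hint (iota j) Hi1 Hi2) as [Hle' Hne].
      assert (Hu : B x (q (iota j))) by (apply Hbb; lia).
      assert (Ehu : h (q (iota j)) = x).
      { symmetry. apply h_unique; auto. apply GLE_k1 in Hle'. exact Hle'. }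
      split; auto. apply GLE_same; auto; rewrite Ehu; reflexivity.
Qed.

Lemma main_result : exists le, total_order le /\ order_extends le C /\
  forall v, card_le (Sr G le r v) m.
Proof.
  exists GLE. split; [apply GLE_total|]. split; [apply GLE_ext|].
  intros v. destruct (sig_spec (h v)) as [_ [_ [_ [_ [_ [_ P3]]]]]].
  destruct (P3 v (h_bag v)) as [l [Hl Hin]]. exists l. split; auto.
  intros w Hw. apply Hin. apply Sr_sub. auto.
Qed.
End Main.

End Torso.

End Dec.
End Tree.

Lemma colstar_G_pos (U G : graph) r m : in_D U G -> colstar_le U r m -> 1 <= r -> colstar_le G r m.
Proof.
  intros [X [eT [B [[[Hsym [Hirr [Hconn Hacyc]]] [Hcov [Hedge Hbcon]]] Htor]]]] HU Hr C HC.
  destruct (classic (inhabited (vert G))) as [[v0]|Hni].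
  2:{ exists (fun _ _ => True). split; [|split].
      - split; [intros; exact I|]. split; [intros x; exfalso; apply Hni; constructor; exact x|].
        split; [intros; exact I| intros; left; exact I].
      - split; [intros i j x; exfalso; apply Hni; constructor; exact x
               | intros c; exfalso; apply Hni; constructor; exact c].
      - intros v; exfalso; apply Hni; constructor; exact v. }
  destruct (vert_countable G) as [g ginj].
  assert (exists rho, forall c, In c C -> B rho c) as [rho Hrho].
  { destruct C as [|c0 C0].
    - destruct (Hcov v0) as [x _]. exists x. intros c [].
    - destruct (Hcov c0) as [x0 _].
      eapply (helly X eT Hsym Hirr Hconn Hacyc x0 G B Hcov Hedge Hbcon); auto. discriminate. }
  exact (main_result X eT Hsym Hirr Hconn Hacyc rho G B Hcov Hedge Hbcon U r m Htor HU Hr C HC Hrho v0 g ginj).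
Qed.

Lemma colstar_G_zero (U G : graph) m : in_D U G -> colstar_le U 0 m -> colstar_le G 0 m.
Proof.
  intros [X [eT [B [[_ [Hcov _]] Htor]]]] HU C [HCnd HCadj].
  destruct (classic (inhabited (vert G))) as [[v0]|Hni].
  2:{ exists (fun _ _ => True). split; [|split].
      - split; [intros; exact I|]. split; [intros x; exfalso; apply Hni; constructor; exact x|].
        split; [intros; exact I| intros; left; exact I].
      - split; [intros i j x; exfalso; apply Hni; constructor; exact x
               | intros c; exfalso; apply Hni; constructor; exact c].
      - intros v; exfalso; apply Hni; constructor; exact v. }
  assert (Hm : 1 <= m).
  { destruct (Hcov v0) as [x Hx]. destruct (Htor x) as [f _].
    set (y0 := f (exist _ v0 Hx)).
    assert (Hcl : ordered_clique U []) by (split; [constructor| intros i j a b _ Ha; destruct i; discriminate]).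
    destruct (HU [] Hcl) as [leU [[Hr _] [_ Hc]]].
    destruct (Hc y0) as [l [Hl Hin]].
    assert (In y0 l).
    { apply Hin. exists (fun _ => y0), 0. split; [lia|]. split; [split; intros; lia|].
      split; auto. split; auto. split; [apply Hr|]. intros; lia. }
    destruct l; [contradiction|]. simpl in Hl. lia. }
  set (idx := fun u => epsilon (inhabits 0) (fun i => nth_error C i = Some u)).
  assert (Hidx : forall u, In u C -> nth_error C (idx u) = Some u).
  { intros u Hu. unfold idx. apply epsilon_spec. apply In_nth_error. auto. }
  destruct (vert_countable G) as [g ginj].
  set (key := fun u => match excluded_middle_informative (In u C) with
                       | left _ => idx u | right _ => length C + g u end).
  assert (Kin : forall u, In u C -> key u = idx u /\ idx u < length C).
  { intros u Hu. unfold key. destruct (excluded_middle_informative (In u C)); [|contradiction].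
    split; auto. apply nth_error_Some. rewrite Hidx; auto. discriminate. }
  assert (Kout : forall u, ~ In u C -> key u = length C + g u).
  { intros u Hu. unfold key. destruct (excluded_middle_informative (In u C)); [contradiction|auto]. }
  assert (Kinj : forall u w, key u = key w -> u = w).
  { intros u w E. destruct (classic (In u C)) as [Hu|Hu]; destruct (classic (In w C)) as [Hw|Hw].
    - destruct (Kin u Hu), (Kin w Hw). pose proof (Hidx u Hu). pose proof (Hidx w Hw). congruence.
    - destruct (Kin u Hu). rewrite (Kout w) in E; auto. lia.
    - destruct (Kin w Hw). rewrite (Kout u) in E; auto. lia.
    - rewrite !Kout in E; auto. apply ginj. lia. }
  assert (Hidx_eq : forall i a, nth_error C i = Some a -> idx a = i).
  { intros i a Ha. assert (In a C) by (eapply nth_error_In; eauto).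
    apply (proj1 (NoDup_nth_error C) HCnd).
    - apply nth_error_Some. rewrite Hidx; auto. discriminate.
    - rewrite Hidx, Ha; auto. }
  exists (fun u w => key u <= key w). split; [|split].
  - split; [intros; lia|]. split; [intros u w H1 H2; apply Kinj; lia|].
    split; [intros; lia|]. intros u w; lia.
  - split.
    + intros i j a b Hij Ha Hb.
      assert (In a C) by (eapply nth_error_In; eauto). assert (In b C) by (eapply nth_error_In; eauto).
      pose proof (Hidx_eq i a Ha). pose proof (Hidx_eq j b Hb).
      destruct (Kin a), (Kin b); auto. split; [lia|]. intro E; subst b; lia.
    + intros c u Hc Hu. destruct (Kin c Hc). split; [simpl; rewrite (Kout u Hu); lia|].
      intro; subst; contradiction.
  - intros v. exists [v]. split; [simpl; lia|]. intros w [p [r' [Hr' [_ [H0 [Hw _]]]]]].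
    replace r' with 0 in Hw by lia. left. congruence.
Qed.

Lemma colstar_spec G r : is_colstar G r (colstar G r).
Proof.
  unfold colstar. apply epsilon_spec.
  destruct (classic (exists m, colstar_le G r m)) as [Hm|Hn].
  - destruct (least_nat _ Hm) as [m [H1 H2]]. exists (Some m). split; auto.
  - exists None. intros m Hm. apply Hn. eauto.
Qed.

Lemma colstar_mono U G r m : in_D U G -> colstar_le U r m -> colstar_le G r m.
Proof.
  intros HD HU. destruct r as [|r']; [apply (colstar_G_zero U); auto|].
  apply (colstar_G_pos U); auto. lia.
Qed.

Theorem mainTheorem16 : forall (U G : graph) (r : nat),
  in_D U G -> ole (colstar G r) (colstar U r).
Proof.
  intros U G r HD. pose proof (colstar_spec U r) as SU. pose proof (colstar_spec G r) as SG.
  destruct (colstar U r) as [m|]; [|destruct (colstar G r); exact I].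
  destruct SU as [HU _]. pose proof (colstar_mono U G r m HD HU) as HG.
  destruct (colstar G r) as [m'|]; simpl.
  - destruct SG as [_ Hmin]. apply Hmin; auto.
  - exact (SG m HG).
Qed.
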